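(* Let $\{Z_t\}$ be random vectors in $\mathcal{Z}$, $\mathcal{M}$ a class of Borel functions $\mathcal{Z}\to\mathbb{R}$, $\ell:\mathcal{Z}\times\mathbb{R}\to\mathbb{R}$ Borel with $\ell(Z_t,f(Z_t))$ integrable, $\ell_t(f):=\ell(Z_t,f(Z_t))$, $Q_n(f)=\frac1n\sum_{t=1}^n\ell_t(f)$, $f_0\in\mathcal{M}$ with $E[Q_n(f_0)]\le E[Q_n(f)]$ for all $f\in\mathcal{M}$, $d_n$ a (semi-)metric on $\mathcal{M}$, $\mathcal{G}_n\subseteq\mathcal{M}$, and $\{\epsilon_n\}$ a positive sequence. Assume: (a.1) there is non-stochastic $f^*_n\in\mathcal{G}_n$ with $d_n(f_n^*,f_0)\le\epsilon_n$ for all $n$; (a.2) there are $C_1,C_2>0$ such that $C_1d_n(f,f_0)^2\le E[Q_n(f)]-E[Q_n(f_0)]\le C_2d_n(f,f_0)^2$ for all $n$ and $f\in\mathcal{G}_n$; (a.3)(iii) there are Borel $m_n:\mathcal{Z}\to[0,\infty)$, positive numbers $b_n$ and a constant $C_3>0$ with $\sup\{E[|\ell_t(f)|\mathbb{1}\{m_n(Z_t)\ge b_n\}]:f\in\mathcal{G}_n,t\in\{1,\dots,n\}\}\le C_3\epsilon_n^2$. For some $c\ge2$ let $\mathcal{H}_n\subset\mathcal{G}_n$ be such that $c\epsilon_n\le d_n(f,f_n^* )$ for each $n$ and all $f\in\mathcal{H}_n$. Then for every $n\in\mathbb{N}$, writing $\mathbb{1}_{nt}=\mathbb{1}\{m_n(Z_t)<b_n\}$,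 $$\sup_{f\in\mathcal{H}_n}\frac1n\sum_{t=1}^n[\ell_t(f_n^* )-\ell_t(f)]\mathbb{1}_{nt}\le\sup_{f\in\mathcal{H}_n}\frac1n\sum_{t=1}^n\Big\{[\ell_t(f_n^* )-\ell_t(f)]\mathbb{1}_{nt}-E\big[(\ell_t(f_n^* )-\ell_t(f))\mathbb{1}_{nt}\big]\Big\}-\big(C_1c^2/4-C_2-2C_3\big)\epsilon_n^2.$$ *)

(* Defs.v *)
From HB Require Import structures.
From mathcomp Require Import all_boot all_order all_algebra.
From mathcomp Require Import all_classical all_reals all_analysis.
Set Implicit Arguments. Unset Strict Implicit. Unset Printing Implicit Defensive.
Import Order.TTheory GRing.Theory Num.Theory.
Local Open Scope ring_scope.
Local Open Scope classical_set_scope.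

Definition Expect {d} {Omega : measurableType d} {R : realType}
  (P : probability Omega R) (X : Omega -> R) : R :=
  Rintegral P setT X.

Definition losst {Omega Zs : Type} {R : realType}
  (ell : Zs -> R -> R) (Z : nat -> Omega -> Zs) (t : nat) (f : Zs -> R) : Omega -> R :=
  fun w => ell (Z t w) (f (Z t w)).

Definition Qn {Omega Zs : Type} {R : realType}
  (ell : Zs -> R -> R) (Z : nat -> Omega -> Zs) (n : nat) (f : Zs -> R) : Omega -> R :=
  fun w => n%:R^-1 * \sum_(1 <= t < n.+1) losst ell Z t f w.

Definition ind_nt {Omega Zs : Type} {R : realType}
  (m : nat -> Zs -> R) (b : nat -> R) (Z : nat -> Omega -> Zs) (n t : nat) : Omega -> R :=
  fun w => ((m n (Z t w) < b n)%R)%:R.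

(* Main.v *)
Require Import Defs.
From HB Require Import structures.
From mathcomp Require Import all_boot all_order all_algebra.
From mathcomp Require Import all_classical all_reals all_analysis.
Import Order.TTheory GRing.Theory Num.Theory.
Local Open Scope ring_scope.
Local Open Scope classical_set_scope.
Set Warnings "-all".
From mathcomp Require Import measurable_realfun.
From mathcomp Require Import ring lra.
Set Warnings "-all".

Section Helpers.
Local Set Implicit Arguments.
Context (R : realType) (d : measure_display) (Omega : measurableType d)
  (P : probability Omega R).

Lemma mbool : measurable_fun setT (fun x : bool => (x%:R : R)).
Proof. by move=> _ Y _; rewrite setTI. Qed.

Lemma bnd (h : Omega -> bool) : [bounded ((h x)%:R : R) | x in setT].
Proof.
exists 1; split; first exact: num_real.
move=> M M1 x _ /=; case: (h x) => /=; rewrite ?normr1 ?normr0; apply/ltW => //.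
exact: lt_trans M1.
Qed.

Lemma intMind (g : Omega -> R) (I : Omega -> bool) :
  P.-integrable setT (EFin \o g) -> measurable_fun setT I ->
  P.-integrable setT (EFin \o (fun x => g x * (I x)%:R)).
Proof.
move=> ig mI.
have := integrableMl measurableT ig (measurableT_comp mbool mI) (bnd I).
by apply: eq_integrable => // x _ /=; rewrite EFinM.
Qed.

Lemma intB (u v : Omega -> R) :
  P.-integrable setT (EFin \o u) -> P.-integrable setT (EFin \o v) ->
  P.-integrable setT (EFin \o (fun x => u x - v x)).
Proof.
move=> iu iv; have := integrableB measurableT iu iv.
by apply: eq_integrable => // x _ /=; rewrite EFinB.
Qed.

Lemma intD (u v : Omega -> R) :
  P.-integrable setT (EFin \o u) -> P.-integrable setT (EFin \o v) ->
  P.-integrable setT (EFin \o (fun x => u x + v x)).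
Proof.
move=> iu iv; have := integrableD measurableT iu iv.
by apply: eq_integrable => // x _ /=; rewrite EFinD.
Qed.

Lemma int_sum (s : seq nat) (F : nat -> Omega -> R) :
  (forall i, P.-integrable setT (EFin \o F i)) ->
  P.-integrable setT (EFin \o (fun w => \sum_(i <- s) F i w)).
Proof.
move=> iF; elim: s => [|h s IH].
  have := integrable0 P setT.
  by apply: eq_integrable => // x _ /=; rewrite big_nil.
have := intD (iF h) IH.
by apply: eq_integrable => // x _ /=; rewrite big_cons.
Qed.

Lemma Rint_sum (s : seq nat) (F : nat -> Omega -> R) :
  (forall i, P.-integrable setT (EFin \o F i)) ->
  Rintegral P setT (fun w => \sum_(i <- s) F i w) =
  \sum_(i <- s) Rintegral P setT (F i).
Proof.
move=> iF; elim: s => [|h s IH].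
  rewrite big_nil.
  under eq_fun do rewrite big_nil.
  by rewrite Rintegral_cst // mul0r.
under eq_fun do rewrite big_cons.
rewrite RintegralD //; last exact: int_sum.
by rewrite IH big_cons.
Qed.

Lemma per_t (u v : Omega -> R) (I J : Omega -> bool) :
  P.-integrable setT (EFin \o u) -> P.-integrable setT (EFin \o v) ->
  measurable_fun setT I -> measurable_fun setT J -> (forall w, I w = ~~ J w) ->
  Rintegral P setT (fun w => (u w - v w) * (I w)%:R) <=
  Rintegral P setT u - Rintegral P setT v
  + (Rintegral P setT (fun w => `|u w| * (J w)%:R)
  + Rintegral P setT (fun w => `|v w| * (J w)%:R)).
Proof.
move=> iu iv mI mJ IJ.
have iuJ := intMind (integrable_norm iu) mJ.
have ivJ := intMind (integrable_norm iv) mJ.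
rewrite (_ : _ + _ = Rintegral P setT (fun w => (u w - v w) +
   (`|u w| * (J w)%:R + `|v w| * (J w)%:R))); last first.
  rewrite RintegralD //; last 2 first.
  - exact: intB.
  - exact: intD.
  by rewrite RintegralB // RintegralD.
apply: le_Rintegral => //.
- exact: intMind (intB iu iv) mI.
- exact: intD (intB iu iv) (intD iuJ ivJ).
move=> x _; rewrite IJ; case: (J x) => /=; rewrite ?mulr1 ?mulr0.
  have := ler_norm (- u x); rewrite normrN => h1.
  have := ler_norm (v x) => h2. lra.
lra.
Qed.

End Helpers.
Theorem lemmaC1 (R : realType) (d : measure_display) (Omega : measurableType d)
  (P : probability Omega R) (dz : measure_display) (Zs : measurableType dz)
  (Z : nat -> Omega -> Zs)
  (M : set (Zs -> R))
  (ell : Zs -> R -> R)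
  (f0 : Zs -> R)
  (dn : nat -> (Zs -> R) -> (Zs -> R) -> R)
  (G : nat -> set (Zs -> R))
  (eps : nat -> R)
  (fstar : nat -> Zs -> R)
  (C1 C2 C3 : R)
  (m : nat -> Zs -> R) (b : nat -> R)
  (c : R) (H : nat -> set (Zs -> R)) :
  (* random vectors Z_t *)
  (forall t, measurable_fun setT (Z t)) ->
  (* M is a class of Borel functions *)
  (forall f, M f -> measurable_fun setT f) ->
  (* ell Borel on Z x R *)
  measurable_fun setT (fun p : Zs * R => ell p.1 p.2) ->
  (* ell(Z_t, f(Z_t)) integrable *)
  (forall f t, M f -> P.-integrable setT (fun w => (losst ell Z t f w)%:E)) ->
  (* f0 minimizes E[Q_n] over M *)
  M f0 ->
  (forall n f, (0 < n)%N -> M f -> Expect P (Qn ell Z n f0) <= Expect P (Qn ell Z n f)) ->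
  (* d_n is a semi-metric on M *)
  (forall n f g, M f -> M g -> 0 <= dn n f g) ->
  (forall n f, M f -> dn n f f = 0) ->
  (forall n f g, M f -> M g -> dn n f g = dn n g f) ->
  (forall n f g h, M f -> M g -> M h -> dn n f h <= dn n f g + dn n g h) ->
  (forall n, G n `<=` M) ->
  (forall n, 0 < eps n) ->
  (* (a.1) *)
  (forall n, (0 < n)%N -> G n (fstar n) /\ dn n (fstar n) f0 <= eps n) ->
  (* (a.2) *)
  0 < C1 -> 0 < C2 ->
  (forall n f, (0 < n)%N -> G n f ->
     C1 * dn n f f0 ^+ 2 <= Expect P (Qn ell Z n f) - Expect P (Qn ell Z n f0) /\
     Expect P (Qn ell Z n f) - Expect P (Qn ell Z n f0) <= C2 * dn n f f0 ^+ 2) ->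
  (* (a.3)(iii) *)
  (forall n, measurable_fun setT (m n)) ->
  (forall n z, 0 <= m n z) ->
  (forall n, 0 < b n) ->
  0 < C3 ->
  (forall n f t, (0 < n)%N -> G n f -> (1 <= t <= n)%N ->
     Expect P (fun w => `|losst ell Z t f w| * ((b n <= m n (Z t w))%R)%:R)
       <= C3 * eps n ^+ 2) ->
  (* H_n and c *)
  2 <= c ->
  (forall n, H n `<=` G n) ->
  (forall n f, (0 < n)%N -> H n f -> c * eps n <= dn n f (fstar n)) ->
  forall n, (0 < n)%N -> forall w : Omega,
    (ereal_sup [set (n%:R^-1 * \sum_(1 <= t < n.+1)
                  (losst ell Z t (fstar n) w - losst ell Z t f w) * ind_nt m b Z n t w)%:E
               | f in H n]
    <= (ereal_sup [set (n%:R^-1 * \sum_(1 <= t < n.+1)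
                  ((losst ell Z t (fstar n) w - losst ell Z t f w) * ind_nt m b Z n t w
                   - Expect P (fun w' => (losst ell Z t (fstar n) w' - losst ell Z t f w')
                                          * ind_nt m b Z n t w')))%:E
               | f in H n]
        - ((C1 * c ^+ 2 / 4 - C2 - 2 * C3) * eps n ^+ 2)%:E))%E.
Proof.
Proof.

move=> mZ mM mell intl Mf0 minf0 dn0 dnn dnsym dntri GM eps0 a1 C10 C20 a2 mm m0 b0 C30 a3 c2 HG Hc n n0 w.
set K := (C1 * c ^+ 2 / 4 - C2 - 2 * C3).
have n0R : (n%:R : R) != 0 by rewrite pnatr_eq0 -lt0n.
have [Gfs dfs] := a1 n n0.
set fs := fstar n in Gfs dfs *.
have Mfs : M fs := GM n fs Gfs.
have mI t : measurable_fun setT (fun w => m n (Z t w) < b n).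
  by apply: measurable_fun_ltr => //; exact: measurableT_comp (mm n) (mZ t).
have mJ t : measurable_fun setT (fun w => b n <= m n (Z t w)).
  by apply: measurable_fun_ler => //; exact: measurableT_comp (mm n) (mZ t).
have EQ f : M f -> Expect P (Qn ell Z n f) =
    n%:R^-1 * \sum_(1 <= t < n.+1) Expect P (losst ell Z t f).
  move=> Mf; rewrite /Expect /Qn RintegralZl //; last by apply: int_sum => i; exact: intl.
  by rewrite Rint_sum // => i; exact: intl.
have key f : H n f -> n%:R^-1 * \sum_(1 <= t < n.+1)
    Expect P (fun w' => (losst ell Z t fs w' - losst ell Z t f w') * ind_nt m b Z n t w')
    <= - (K * eps n ^+ 2).
  move=> Hf; have Gf := HG n f Hf; have Mf := GM n f Gf.
  have S1 : \sum_(1 <= t < n.+1)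
    Expect P (fun w' => (losst ell Z t fs w' - losst ell Z t f w') * ind_nt m b Z n t w')
    <= \sum_(1 <= t < n.+1) (Expect P (losst ell Z t fs) - Expect P (losst ell Z t f)
         + 2 * C3 * eps n ^+ 2).
    apply: ler_sum_nat => t /andP[t1 tn].
    apply: le_trans.
      apply: (@per_t _ _ _ P _ _ (fun w => m n (Z t w) < b n) (fun w => b n <= m n (Z t w))).
      - exact: intl.
      - exact: intl.
      - exact: mI.
      - exact: mJ.
      - by move=> w'; rewrite ltNge.
    rewrite /Expect /=.
    have tr : (1 <= t <= n)%N by rewrite t1 /= -ltnS.
    have h1 := a3 n fs t n0 Gfs tr.
    have h2 := a3 n f t n0 Gf tr.
    rewrite /Expect in h1 h2; lra.
  have S2 : \sum_(1 <= t < n.+1) (Expect P (losst ell Z t fs) - Expect P (losst ell Z t f)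
         + 2 * C3 * eps n ^+ 2) = \sum_(1 <= t < n.+1) Expect P (losst ell Z t fs)
         - \sum_(1 <= t < n.+1) Expect P (losst ell Z t f) + (2 * C3 * eps n ^+ 2) *+ n.
    by rewrite big_split sumrB /= sumr_const_nat subn1.
  have ninv : 0 <= (n%:R : R)^-1 by rewrite invr_ge0.
  have S3 := ler_wpM2l ninv S1.
  have ee : forall x : R, (n%:R : R)^-1 * (x *+ n) = x by move=> x; rewrite -mulr_natr; field.
  rewrite S2 mulrDr mulrBr ee -!EQ // in S3.
  have [A1 A2] := a2 n f n0 Gf.
  have [B1 B2] := a2 n fs n0 Gfs.
  have hc := Hc n f n0 Hf.
  have tri := dntri n f f0 fs Mf Mf0 Mfs.
  rewrite (dnsym n f0 fs Mf0 Mfs) in tri.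
  have d1 := dn0 n f f0 Mf Mf0.
  have d2 := dn0 n fs f0 Mfs Mf0.
  move: S3 A1 A2 B1 B2 hc tri d1 d2 dfs.
  set Sm := _ * \sum_(_ <= _ < _) _.
  set ds := dn n fs f0. set df := dn n f f0. set e := eps n.
  set Xs := Expect P (Qn ell Z n fs). set Xf := Expect P (Qn ell Z n f).
  set X0 := Expect P (Qn ell Z n f0).
  move=> S3 A1 A2 B1 B2 hc tri d1 d2 dfs.
  have e0 := eps0 n; rewrite -/e in e0.
  have q1 : ds ^+ 2 <= e ^+ 2 by rewrite ler_pXn2r // ?nnegrE //; lra.
  have q2 : (c * e / 2) ^+ 2 <= df ^+ 2.
    have ce2 : 2 * e <= c * e by rewrite ler_wpM2r //; exact: ltW.
    rewrite ler_pXn2r // ?nnegrE //; lra.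
  have p1 : C2 * ds ^+ 2 <= C2 * e ^+ 2 by rewrite ler_wpM2l //; lra.
  have p2 : C1 * (c * e / 2) ^+ 2 <= C1 * df ^+ 2 by rewrite ler_wpM2l //; lra.
  rewrite /K.
  have eq4 : (c * e / 2) ^+ 2 = c ^+ 2 * e ^+ 2 / 4 by rewrite expr_div_n exprMn; congr (_ / _); rewrite expr2; lra.
  rewrite eq4 in p2.
  have -> : (C1 * c ^+ 2 / 4 - C2 - 2 * C3) * e ^+ 2 =
    C1 * (c ^+ 2 * e ^+ 2 / 4) - C2 * e ^+ 2 - 2 * C3 * e ^+ 2 by field.
  lra.
apply: ge_ereal_sup => _ [f Hf <-].
have kf := key f Hf.
apply: le_trans; last first.
  apply: leeB; last exact: lexx.
  apply: ereal_sup_ubound; exists f => //.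
rewrite -EFinB lee_fin.
rewrite sumrB mulrBr; lra.
Qed.
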